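(* Let $J$ be a non-degenerate interval, $f_{1,\infty}$ an $m$-periodic sequence of continuous surjective self-maps of $J$, and $g=f_m\circ\cdots\circ f_1$. If the autonomous system $(J,g)$ is topologically transitive, then $(J,f_{1,\infty})$ is Devaney chaotic.
   Context: $m$-periodic: $f_{n+m}=f_n$ for all $n$. Write $f_1^n=f_n\circ\cdots\circ f_1$. For the non-autonomous system: topologically transitive means for all non-empty open $U,V$ some $n$ with $f_1^n(U)\cap V\ne\emptyset$; a point $x$ is periodic if there is $n$ with $f_1^{nk}(x)=x$ for all $k\in\mathbb{N}$; sensitive means there is $\delta>0$ such that for every $x$ and neighbourhood $U$ of $x$ there exist $y\in U$, $n$ with $|f_1^n(x)-f_1^n(y)|>\delta$; Devaney chaotic means topologically transitive, dense periodic points, and sensitive. *)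

(* Defs.v *)
From Stdlib Require Import Reals.
Open Scope R_scope.

Definition is_interval (J : R -> Prop) : Prop :=
  forall x y z, J x -> J z -> x <= y -> y <= z -> J y.

Definition nondegenerate (J : R -> Prop) : Prop :=
  exists a b, J a /\ J b /\ a < b.

Definition rel_open (J U : R -> Prop) : Prop :=
  (forall x, U x -> J x) /\
  forall x, U x -> exists eps, eps > 0 /\
    forall y, J y -> Rabs (y - x) < eps -> U y.

Definition nonempty (U : R -> Prop) : Prop := exists x, U x.

Definition maps_into (J : R -> Prop) (f : R -> R) : Prop :=
  forall x, J x -> J (f x).

Definition cont_on (J : R -> Prop) (f : R -> R) : Prop :=
  forall x, J x -> forall eps, eps > 0 -> exists delta, delta > 0 /\
    forall y, J y -> Rabs (y - x) < delta -> Rabs (f y - f x) < eps.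

Definition surj_on (J : R -> Prop) (f : R -> R) : Prop :=
  forall y, J y -> exists x, J x /\ f x = y.

Definition cont_surj_self_map (J : R -> Prop) (f : R -> R) : Prop :=
  maps_into J f /\ cont_on J f /\ surj_on J f.

(* Sequences f_1, f_2, ... are modelled as f : nat -> R -> R, with the
   index 0 unused.  naiter f n = f_1^n = f_n o ... o f_1, naiter f 0 = id. *)
Fixpoint naiter (f : nat -> R -> R) (n : nat) (x : R) : R :=
  match n with
  | O => x
  | S k => f (S k) (naiter f k x)
  end.

Definition m_periodic (f : nat -> R -> R) (m : nat) : Prop :=
  (1 <= m)%nat /\ forall n, (1 <= n)%nat -> f (n + m)%nat = f n.

Fixpoint iter (g : R -> R) (n : nat) (x : R) : R :=
  match n with
  | O => x
  | S k => g (iter g k x)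
  end.

Definition auto_transitive (J : R -> Prop) (g : R -> R) : Prop :=
  forall U V, rel_open J U -> nonempty U -> rel_open J V -> nonempty V ->
    exists n, (1 <= n)%nat /\ exists x, U x /\ V (iter g n x).

Definition na_transitive (J : R -> Prop) (f : nat -> R -> R) : Prop :=
  forall U V, rel_open J U -> nonempty U -> rel_open J V -> nonempty V ->
    exists n, (1 <= n)%nat /\ exists x, U x /\ V (naiter f n x).

Definition na_periodic_point (f : nat -> R -> R) (x : R) : Prop :=
  exists n, (1 <= n)%nat /\ forall k, (1 <= k)%nat -> naiter f (n * k) x = x.

Definition na_dense_periodic (J : R -> Prop) (f : nat -> R -> R) : Prop :=
  forall U, rel_open J U -> nonempty U -> exists x, U x /\ na_periodic_point f x.

Definition na_sensitive (J : R -> Prop) (f : nat -> R -> R) : Prop :=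
  exists delta, delta > 0 /\
    forall x U, J x -> rel_open J U -> U x ->
      exists y n, U y /\ Rabs (naiter f n x - naiter f n y) > delta.

Definition na_devaney_chaotic (J : R -> Prop) (f : nat -> R -> R) : Prop :=
  na_transitive J f /\ na_dense_periodic J f /\ na_sensitive J f.

(* Main.v *)
Require Import Defs.
From Stdlib Require Import Reals Lra Lia Classical.
Open Scope R_scope.

Ltac rabs_solve := unfold Rabs in *; repeat match goal with
  | |- context [Rcase_abs ?x] => destruct (Rcase_abs x)
  | H : context [Rcase_abs ?x] |- _ => destruct (Rcase_abs x)
  end; lra.

Lemma iter_add g a b x : iter g (a + b) x = iter g a (iter g b x).
Proof. induction a; simpl; congruence. Qed.

Lemma iter_S' g n x : iter g (S n) x = iter g n (g x).
Proof. replace (S n) with (n + 1)%nat by lia. rewrite iter_add. reflexivity. Qed.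

Lemma iter_period g N p j : iter g N p = p -> iter g (N * j) p = p.
Proof. intro H. induction j. now rewrite Nat.mul_0_r.
 replace (N * S j)%nat with (N + N*j)%nat by lia. rewrite iter_add, IHj. exact H. Qed.

Lemma naiter_add f m n x : m_periodic f m -> naiter f (m + n) x = naiter f n (naiter f m x).
Proof. intros [Hm Hp]. induction n. now rewrite Nat.add_0_r.
 replace (m + S n)%nat with (S (m + n)) by lia. simpl. rewrite IHn.
 replace (S (m+n)) with (S n + m)%nat by lia. rewrite Hp by lia. reflexivity. Qed.

Lemma naiter_mul f m j x : m_periodic f m -> naiter f (m * j) x = iter (naiter f m) j x.
Proof. intro Hp. revert x. induction j; intro x. now rewrite Nat.mul_0_r.
 replace (m * S j)%nat with (m + m*j)%nat by lia. rewrite naiter_add by exact Hp.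
 rewrite IHj. rewrite iter_S'. reflexivity. Qed.

Lemma cont_comp J h1 h2 : maps_into J h1 -> cont_on J h1 -> cont_on J h2 -> cont_on J (fun x => h2 (h1 x)).
Proof. intros M1 C1 C2 x Jx eps He.
 destruct (C2 (h1 x) (M1 x Jx) eps He) as [d2 [Hd2 H2]].
 destruct (C1 x Jx d2 Hd2) as [d1 [Hd1 H1]].
 exists d1; split; [exact Hd1|]. intros y Jy Hy. apply H2. apply M1; auto. apply H1; auto. Qed.

Lemma cont_id J : cont_on J (fun t => t).
Proof. intros x Jx eps He; exists eps; split; auto. Qed.

Lemma naiter_maps J f n : (forall k, (1<=k)%nat -> cont_surj_self_map J (f k)) ->
  maps_into J (naiter f n) /\ cont_on J (naiter f n).
Proof. intro H. induction n. split. intros x Jx; exact Jx. exact (cont_id J).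
 destruct IHn as [M C]. destruct (H (S n) ltac:(lia)) as [Mf [Cf _]]. split.
 intros x Jx; simpl; apply Mf, M, Jx.
 exact (cont_comp J _ _ M C Cf). Qed.

Lemma iter_maps J g n : maps_into J g -> cont_on J g ->
  maps_into J (iter g n) /\ cont_on J (iter g n).
Proof. intros Mg Cg. induction n. split. intros x Jx; exact Jx. exact (cont_id J).
 destruct IHn as [M C]. split.
 intros x Jx; simpl; apply Mg, M, Jx.
 exact (cont_comp J _ _ M C Cg). Qed.

Lemma rel_open_ball J h c d : cont_on J h -> rel_open J (fun t => J t /\ Rabs (h t - c) < d).
Proof. intro C. split. intros x [Jx _]; exact Jx.
 intros x [Jx Hx]. destruct (C x Jx (d - Rabs (h x - c))) as [e [He H]]. lra.
 exists e; split; auto. intros y Jy Hy. split; auto. specialize (H y Jy Hy).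
 pose proof (Rabs_triang (h y - h x) (h x - c)) as T.
 replace (h y - h x + (h x - c)) with (h y - c) in T by ring. lra. Qed.

Lemma rel_open_inter J A B : rel_open J A -> rel_open J B -> rel_open J (fun t => A t /\ B t).
Proof. intros [SA OA] [SB OB]. split. intros x [Ax _]; auto.
 intros x [Ax Bx]. destruct (OA x Ax) as [e1 [He1 H1]]. destruct (OB x Bx) as [e2 [He2 H2]].
 exists (Rmin e1 e2). split. apply Rmin_glb_lt; auto.
 intros y Jy Hy. split. apply H1; auto. eapply Rlt_le_trans; [exact Hy| apply Rmin_l].
 apply H2; auto. eapply Rlt_le_trans; [exact Hy| apply Rmin_r]. Qed.

Lemma rel_open_ext J A B : (forall t, A t <-> B t) -> rel_open J A -> rel_open J B.
Proof. intros E [S O]. split. intros x Bx; apply S, E, Bx.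
 intros x Bx. destruct (O x (proj2 (E x) Bx)) as [e [He H]]. exists e; split; auto.
 intros y Jy Hy; apply E, H; auto. Qed.

Lemma rel_open_interval J a b : rel_open J (fun t => J t /\ a < t < b).
Proof. split. intros x [Jx _]; auto.
 intros x [Jx Hx]. exists (Rmin (x - a) (b - x)). split. apply Rmin_glb_lt; lra.
 intros y Jy Hy. split; auto. pose proof (Rmin_l (x-a) (b-x)). pose proof (Rmin_r (x-a) (b-x)).
 rabs_solve. Qed.

Lemma cl_lip lo hi x y : lo <= hi ->
  Rabs (Rmax lo (Rmin hi y) - Rmax lo (Rmin hi x)) <= Rabs (y - x).
Proof. intro H. unfold Rmax, Rmin. repeat destruct Rle_dec; rabs_solve. Qed.

Lemma ivt_J J h lo hi : cont_on J h -> lo <= hi -> (forall t, lo <= t <= hi -> J t) ->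
  (h lo - lo) * (h hi - hi) <= 0 -> exists z, lo <= z <= hi /\ h z = z.
Proof. intros C Hlh Hs Hp.
 set (cl := fun t => Rmax lo (Rmin hi t)).
 assert (Hcl : forall t, lo <= cl t <= hi). { intro t; unfold cl, Rmax, Rmin. repeat destruct Rle_dec; lra. }
 assert (Hcl2 : forall t, lo <= t <= hi -> cl t = t). { intros t Ht; unfold cl, Rmax, Rmin. repeat destruct Rle_dec; lra. }
 set (F := fun t => h (cl t) - cl t).
 assert (CF : continuity F).
 { intro x. unfold continuity_pt, continue_in, limit1_in, limit_in. intros eps He.
   destruct (C (cl x) (Hs _ (Hcl x)) (eps/2)) as [d [Hd Hh]]. lra.
   exists (Rmin d (eps/2)). split. apply Rmin_glb_lt; lra.
   intros y [_ Hy]. simpl in *. unfold R_dist in *.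
   pose proof (Rmin_l d (eps/2)). pose proof (Rmin_r d (eps/2)).
   pose proof (cl_lip lo hi x y Hlh) as L. fold (cl y) (cl x) in L.
   assert (Rabs (h (cl y) - h (cl x)) < eps/2). { apply Hh. apply Hs, Hcl. lra. }
   unfold F. rabs_solve. }
 destruct (IVT_cor F lo hi CF Hlh) as [z [Hz Fz]].
 { unfold F. rewrite !Hcl2 by lra. exact Hp. }
 exists z. split; auto. unfold F in Fz. rewrite Hcl2 in Fz by lra. lra. Qed.

Lemma ivt2 J h u v : cont_on J h -> (forall t, Rmin u v <= t <= Rmax u v -> J t) ->
  (h u - u) * (h v - v) <= 0 -> exists z, Rmin u v <= z <= Rmax u v /\ h z = z.
Proof. intros C Hs Hp. destruct (Rle_dec u v) as [Huv|Huv].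
 - rewrite Rmin_left, Rmax_right in * by lra. apply (ivt_J J); auto.
 - rewrite Rmin_right, Rmax_left in * by lra. apply (ivt_J J); auto. lra. rewrite Rmult_comm; auto. Qed.

Lemma no_sign_change J g a p q u v : is_interval J -> J p -> J q -> maps_into J g -> cont_on J g ->
  (forall z, p < z < q -> iter g a z <> z) -> p < u < q -> p < v < q ->
  (iter g a u - u) * (iter g a v - v) <= 0 -> False.
Proof. intros IJ Jp Jq Mg Cg Hn Hu Hv Hp.
 destruct (iter_maps J g a Mg Cg) as [_ C].
 destruct (ivt2 J (iter g a) u v C) as [z [Hz Fz]]; auto.
 - intros t Ht. apply (IJ p t q); auto.
   + pose proof (Rmin_glb_lt u v p ltac:(lra) ltac:(lra)). lra.
   + pose proof (Rmax_lub_lt u v q ltac:(lra) ltac:(lra)). lra.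
 - apply (Hn z); auto.
   pose proof (Rmin_glb_lt u v p ltac:(lra) ltac:(lra)).
   pose proof (Rmax_lub_lt u v q ltac:(lra) ltac:(lra)). lra. Qed.

Lemma sub_interval J U x0 : is_interval J -> nondegenerate J -> rel_open J U -> U x0 ->
  exists p q, p < q /\ forall t, p <= t <= q -> U t.
Proof. intros IJ [a [b [Ja [Jb Hab]]]] [SU OU] Ux.
 destruct (OU x0 Ux) as [e [He H]]. pose proof (SU x0 Ux) as Jx.
 destruct (Rlt_dec x0 b) as [Hxb|Hxb].
 - exists x0, (Rmin b (x0 + e/2)). split. apply Rmin_glb_lt; lra.
   intros t Ht. pose proof (Rmin_l b (x0+e/2)). pose proof (Rmin_r b (x0+e/2)).
   apply H. apply (IJ x0 t b); auto; lra. rabs_solve.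
 - exists (Rmax a (x0 - e/2)), x0. split. apply Rmax_lub_lt; lra.
   intros t Ht. pose proof (Rmax_l a (x0-e/2)). pose proof (Rmax_r a (x0-e/2)).
   apply H. apply (IJ a t x0); auto; lra. rabs_solve. Qed.

Lemma dense_per J g : is_interval J -> nondegenerate J -> maps_into J g -> cont_on J g ->
  auto_transitive J g ->
  forall U, rel_open J U -> nonempty U -> exists x, U x /\ exists N, (1<=N)%nat /\ iter g N x = x.
Proof. intros IJ ND Mg Cg Tg U OU [x0 Ux0].
 destruct (sub_interval J U x0 IJ ND OU Ux0) as [p [q [Hpq HU]]].
 assert (Jpq : forall t, p <= t <= q -> J t) by (intros t Ht; apply (proj1 OU), HU, Ht).
 apply NNPP. intro Hno.
 assert (Hn : forall a z, (1 <= a)%nat -> p < z < q -> iter g a z <> z).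
 { intros a z Ha Hz E. apply Hno. exists z. split. apply HU; lra. exists a; auto. }
 set (c := (p+q)/2).
 assert (Jp : J p) by (apply Jpq; lra). assert (Jq : J q) by (apply Jpq; lra).
 destruct (Tg (fun t => J t /\ c < t < q) (fun t => J t /\ p < t < c)) as [a [Ha [x [[Jx Hx] [_ Hax]]]]].
 apply rel_open_interval. exists ((c+q)/2). split. apply Jpq; unfold c; lra. unfold c; lra.
 apply rel_open_interval. exists ((p+c)/2). split. apply Jpq; unfold c; lra. unfold c; lra.
 destruct (Tg (fun t => J t /\ p < t < c) (fun t => J t /\ c < t < q)) as [b [Hb [t [[Jt Ht] [_ Hbt]]]]].
 apply rel_open_interval. exists ((p+c)/2). split. apply Jpq; unfold c; lra. unfold c; lra.
 apply rel_open_interval. exists ((c+q)/2). split. apply Jpq; unfold c; lra. unfold c; lra.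
 unfold c in *.
 set (Pos := fun k => forall z, p < z < q -> iter g k z > z).
 set (Neg := fun k => forall z, p < z < q -> iter g k z < z).
 assert (PosW : forall k, (1 <= k)%nat -> iter g k t > t -> Pos k).
 { intros k Hk Hkt z Hz. destruct (Rle_dec (iter g k z) z); [|lra]. exfalso.
   apply (no_sign_change J g k p q t z IJ Jp Jq Mg Cg (fun z => Hn k z Hk) ltac:(lra) Hz). nra. }
 assert (NegW : forall k, (1 <= k)%nat -> iter g k x < x -> Neg k).
 { intros k Hk Hkt z Hz. destruct (Rle_dec z (iter g k z)); [|lra]. exfalso.
   apply (no_sign_change J g k p q x z IJ Jp Jq Mg Cg (fun z => Hn k z Hk) ltac:(lra) Hz). nra. }
 assert (Pb : forall j, (1 <= j)%nat -> Pos (b * j)%nat).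
 { induction j as [|j IH]; intro Hj. lia.
   destruct (Nat.eq_dec j 0) as [->|Hj0]. rewrite Nat.mul_1_r. apply PosW; auto; lra.
   apply PosW. nia. replace (b * S j)%nat with (b*j + b)%nat by lia. rewrite iter_add.
   specialize (IH ltac:(lia) (iter g b t) ltac:(lra)). lra. }
 assert (Na : forall j, (1 <= j)%nat -> Neg (a * j)%nat).
 { induction j as [|j IH]; intro Hj. lia.
   destruct (Nat.eq_dec j 0) as [->|Hj0]. rewrite Nat.mul_1_r. apply NegW; auto; lra.
   apply NegW. nia. replace (a * S j)%nat with (a*j + a)%nat by lia. rewrite iter_add.
   specialize (IH ltac:(lia) (iter g a x) ltac:(lra)). lra. }
 specialize (Pb a Ha t ltac:(lra)). specialize (Na b Hb t ltac:(lra)).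
 rewrite Nat.mul_comm in Pb. lra. Qed.

Lemma finmin1 (G : nat -> R) n : (forall i, (i < n)%nat -> G i > 0) ->
  exists d, d > 0 /\ forall i, (i < n)%nat -> G i >= d.
Proof. induction n; intro H. exists 1; split; [lra| intros; lia].
 destruct IHn as [d [Hd Hi]]. intros; apply H; lia.
 exists (Rmin d (G n)). split. apply Rmin_glb_lt; auto. apply H; lia.
 intros i Hi'. destruct (Nat.eq_dec i n) as [->|Hne].
 pose proof (Rmin_r d (G n)); lra.
 pose proof (Rmin_l d (G n)); specialize (Hi i ltac:(lia)); lra. Qed.

Lemma finmin2 (F : nat -> nat -> R) n1 n2 :
  (forall i j, (i < n1)%nat -> (j < n2)%nat -> F i j > 0) ->
  exists d, d > 0 /\ forall i j, (i < n1)%nat -> (j < n2)%nat -> F i j >= d.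
Proof. induction n1; intro H. exists 1; split; [lra| intros; lia].
 destruct IHn1 as [d [Hd Hi]]. intros; apply H; lia.
 destruct (finmin1 (F n1) n2) as [d2 [Hd2 H2]]. intros; apply H; lia.
 exists (Rmin d d2). split. apply Rmin_glb_lt; auto.
 intros i j Hi' Hj. destruct (Nat.eq_dec i n1) as [->|Hne].
 pose proof (Rmin_r d d2); specialize (H2 j Hj); lra.
 pose proof (Rmin_l d d2); specialize (Hi i j ltac:(lia) Hj); lra. Qed.

Lemma orbit_red g q N : (1 <= N)%nat -> iter g N q = q ->
  forall i, exists i', (i' < N)%nat /\ iter g i q = iter g i' q.
Proof. intros HN Hq i. induction i. exists 0%nat; split; auto; lia.
 destruct IHi as [i' [Hi' E]]. simpl. rewrite E.
 destruct (Nat.eq_dec (S i') N) as [Es|Ne].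
 exists 0%nat. split. lia. simpl. change (iter g (S i') q = q). rewrite Es; auto.
 exists (S i'). split. lia. reflexivity. Qed.

Lemma avoid g q1 a b : a < b -> forall k, exists p' q', a <= p' /\ p' < q' /\ q' <= b /\
  forall i, (i < k)%nat -> ~ (p' < iter g i q1 < q').
Proof. intros Hab k. induction k. exists a, b. repeat split; try lra. intros; lia.
 destruct IHk as [p' [q' [H1 [H2 [H3 H4]]]]]. set (s := iter g k q1).
 destruct (Rle_dec s ((p'+q')/2)).
 - exists ((p'+q')/2), q'. repeat split; try lra. intros i Hi.
   destruct (Nat.eq_dec i k) as [->|Hne]. fold s; lra.
   intro C; apply (H4 i ltac:(lia)); lra.
 - exists p', ((p'+q')/2). repeat split; try lra. intros i Hi.
   destruct (Nat.eq_dec i k) as [->|Hne]. fold s; lra.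
   intro C; apply (H4 i ltac:(lia)); lra. Qed.

Lemma two_orbits J g : is_interval J -> nondegenerate J -> maps_into J g -> cont_on J g ->
  auto_transitive J g ->
  exists d, d > 0 /\ forall x, exists q, J q /\ forall i, Rabs (x - iter g i q) >= d.
Proof. intros IJ ND Mg Cg Tg.
 pose proof ND as [a [b [Ja [Jb Hab]]]].
 destruct (dense_per J g IJ ND Mg Cg Tg J) as [q1 [Jq1 [N1 [HN1 Hq1]]]].
 { split. auto. intros x Jx. exists 1. split. lra. auto. }
 { exists a; auto. }
 destruct (avoid g q1 a b Hab N1) as [p' [q' [H1 [H2 [H3 H4]]]]].
 destruct (dense_per J g IJ ND Mg Cg Tg (fun t => J t /\ p' < t < q')) as [q2 [[Jq2 Hq2r] [N2 [HN2 Hq2]]]].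
 apply rel_open_interval. exists ((p'+q')/2). split. apply (IJ a _ b); auto; lra. lra.
 assert (Dis : forall i j, iter g i q1 <> iter g j q2).
 { intros i j E.
   assert (E2 : iter g ((N2*j - j) + i) q1 = q2).
   { rewrite iter_add, E, <- iter_add. replace (N2 * j - j + j)%nat with (N2 * j)%nat by nia.
     apply iter_period; auto. }
   destruct (orbit_red g q1 N1 HN1 Hq1 (N2 * j - j + i)) as [i' [Hi' E3]].
   apply (H4 i' Hi'). rewrite <- E3, E2. lra. }
 destruct (finmin2 (fun i j => Rabs (iter g i q1 - iter g j q2)) N1 N2) as [d0 [Hd0 Hmin]].
 { intros i j _ _. apply Rabs_pos_lt. intro E. apply (Dis i j). lra. }
 assert (All : forall i j, Rabs (iter g i q1 - iter g j q2) >= d0).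
 { intros i j. destruct (orbit_red g q1 N1 HN1 Hq1 i) as [i' [Hi' E1]].
   destruct (orbit_red g q2 N2 HN2 Hq2 j) as [j' [Hj' E2]].
   rewrite E1, E2. apply (Hmin i' j'); auto. }
 exists (d0/2). split. lra. intro x.
 destruct (classic (forall i, Rabs (x - iter g i q1) >= d0/2)) as [Hc|Hc].
 exists q1; auto.
 exists q2. split; auto. intro j. apply not_all_ex_not in Hc. destruct Hc as [i Hi].
 apply Rnot_ge_lt in Hi. specialize (All i j).
 destruct (Rge_dec (Rabs (x - iter g j q2)) (d0/2)) as [|Hj]; auto.
 apply Rnot_ge_lt in Hj. exfalso. rabs_solve. Qed.

Lemma rel_open_orbit J g q d N : maps_into J g -> cont_on J g ->
  rel_open J (fun t => J t /\ forall i, (i <= N)%nat -> Rabs (iter g i t - iter g i q) < d).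
Proof. intros Mg Cg. induction N.
 - apply (rel_open_ext J (fun t => J t /\ Rabs (iter g 0 t - iter g 0 q) < d)).
   + intro t. split. intros [Jt H]. split; auto. intros i Hi. replace i with 0%nat by lia. auto.
     intros [Jt H]. split; auto.
   + apply rel_open_ball. apply iter_maps; auto.
 - eapply rel_open_ext; [| apply (rel_open_inter J _ _ IHN (rel_open_ball J (iter g (S N)) (iter g (S N) q) d (proj2 (iter_maps J g (S N) Mg Cg))))].
   intro t. split.
   + intros [[Jt H] [_ H']]. split; auto. intros i Hi. destruct (Nat.eq_dec i (S N)) as [->|Hne]; auto.
     apply H; lia.
   + intros [Jt H]. split. split; auto. split; auto. Qed.

Lemma sens_auto J g : is_interval J -> nondegenerate J -> maps_into J g -> cont_on J g ->
  auto_transitive J g ->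
  exists delta, delta > 0 /\ forall x U, J x -> rel_open J U -> U x ->
    exists y n, U y /\ Rabs (iter g n x - iter g n y) > delta.
Proof. intros IJ ND Mg Cg Tg.
 destruct (two_orbits J g IJ ND Mg Cg Tg) as [d0 [Hd0 Horb]].
 set (dl := d0/8).
 exists (2*dl). split. unfold dl; lra.
 intros x U Jx OU Ux.
 destruct OU as [SU OU']. destruct (OU' x Ux) as [e [He HUe]].
 set (r := Rmin e dl). assert (Hr1 : r <= e) by apply Rmin_l. assert (Hr2 : r <= dl) by apply Rmin_r.
 assert (Hr : r > 0) by (apply Rmin_glb_lt; unfold dl; lra).
 destruct (dense_per J g IJ ND Mg Cg Tg (fun t => J t /\ Rabs (t - x) < r)) as [p [[Jp Hp] [N [HN HpN]]]].
 apply (rel_open_ball J (fun t => t)). apply cont_id.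
 exists x. split; auto. rewrite Rminus_diag_eq, Rabs_R0; auto.
 destruct (Horb x) as [q [Jq Hq]].
 destruct (Tg (fun t => J t /\ Rabs (t - x) < r)
              (fun t => J t /\ forall i, (i <= N)%nat -> Rabs (iter g i t - iter g i q) < dl))
   as [k [Hk [y [[Jy Hy] [_ HV]]]]].
 apply (rel_open_ball J (fun t => t)). apply cont_id.
 exists x. split; auto. rewrite Rminus_diag_eq, Rabs_R0; auto.
 apply rel_open_orbit; auto.
 exists q. split; auto. intros i _. rewrite Rminus_diag_eq, Rabs_R0; unfold dl; lra.
 set (n := (N * (k / N + 1))%nat).
 assert (Hdm := Nat.div_mod_eq k N). assert (Hmb := Nat.mod_upper_bound k N ltac:(lia)).
 assert (En : n = (N * (k / N) + N)%nat) by (unfold n; ring).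
 set (i := (n - k)%nat).
 assert (Hi : (i <= N)%nat) by (unfold i; lia).
 assert (Eny : iter g n y = iter g i (iter g k y)) by (rewrite <- iter_add; f_equal; unfold i; lia).
 assert (Enp : iter g n p = p) by (unfold n; apply iter_period; auto).
 specialize (HV i Hi). rewrite <- Eny in HV. specialize (Hq i).
 destruct (Rgt_dec (Rabs (iter g n x - iter g n p)) (2*dl)) as [G|G].
 - exists p, n. split; auto. apply HUe; auto. lra.
 - exists y, n. split. apply HUe; auto. lra.
   apply Rnot_gt_le in G. rewrite Enp in G. unfold dl in *. rabs_solve. Qed.

Theorem mainTheorem18 (J : R -> Prop) (f : nat -> R -> R) (m : nat) :
  is_interval J -> nondegenerate J ->
  (forall n, (1 <= n)%nat -> cont_surj_self_map J (f n)) ->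
  m_periodic f m ->
  auto_transitive J (naiter f m) ->
  na_devaney_chaotic J f.
Proof.
 intros IJ ND Hf Hp Tg.
 destruct (naiter_maps J f m Hf) as [Mg Cg].
 pose proof Hp as [Hm _].
 split; [|split].
 - intros U V OU NU OV NV. destruct (Tg U V OU NU OV NV) as [n [Hn [x [Ux Vx]]]].
   exists (m * n)%nat. split. nia. exists x. split; auto. rewrite naiter_mul; auto.
 - intros U OU NU. destruct (dense_per J _ IJ ND Mg Cg Tg U OU NU) as [x [Ux [N [HN Hx]]]].
   exists x. split; auto. exists (m * N)%nat. split. nia. intros k Hk.
   rewrite <- Nat.mul_assoc, naiter_mul by auto. apply iter_period; auto.
 - destruct (sens_auto J _ IJ ND Mg Cg Tg) as [d [Hd H]]. exists d. split; auto.
   intros x U Jx OU Ux. destruct (H x U Jx OU Ux) as [y [n [Uy Hy]]].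
   exists y, (m * n)%nat. split; auto. rewrite !naiter_mul by auto. exact Hy.
Qed.
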